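(* Let $R$ be a commutative Noetherian ring of finite Krull dimension $d$ such that $R/\mathfrak{m}$ is infinite for every maximal ideal $\mathfrak{m}$ of $R$. Let $R[x_1,\ldots,x_n]$ be a polynomial ring over $R$ and $J \subseteq R[x_1,\ldots,x_n]$ an ideal with $\mathrm{height}(J) \geq d+1$. Then for every integer $0 \leq \ell \leq n$ there exist $r_1,\ldots,r_\ell \in R$ such that either $J + (x_1 - r_1, \ldots, x_\ell - r_\ell) = R[x_1,\ldots,x_n]$, or $\mathrm{height}(J + (x_1 - r_1,\ldots,x_\ell - r_\ell)) \geq d + \ell + 1$ (for $\ell = 0$ the ideal is understood to be $J$). *)

(* Defs.v *)
From mathcomp Require Import all_boot all_algebra.
From mathcomp Require Export mpoly.
Set Implicit Arguments. Unset Strict Implicit. Unset Printing Implicit Defensive.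
Import GRing.Theory.
Local Open Scope ring_scope.

Section Ideals.
Variable A : comRingType.

Definition is_ideal (I : A -> Prop) : Prop :=
  I 0 /\ (forall x y, I x -> I y -> I (x + y)) /\ (forall a x, I x -> I (a * x)).

Definition sub_ideal (I K : A -> Prop) : Prop := forall x, I x -> K x.

Definition prime_ideal (P : A -> Prop) : Prop :=
  is_ideal P /\ ~ P 1 /\ (forall a b, P (a * b) -> P a \/ P b).

Definition maximal_ideal (M : A -> Prop) : Prop :=
  is_ideal M /\ ~ M 1 /\
  (forall K, is_ideal K -> sub_ideal M K -> ~ K 1 -> sub_ideal K M).

Definition noetherian : Prop :=
  forall I : nat -> A -> Prop, (forall k, is_ideal (I k)) ->
  (forall k, sub_ideal (I k) (I k.+1)) ->
  exists N, forall k, (N <= k)%N -> sub_ideal (I k) (I N).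

Definition prime_chain (P : nat -> A -> Prop) (k : nat) : Prop :=
  (forall i, (i <= k)%N -> prime_ideal (P i)) /\
  (forall i, (i < k)%N -> sub_ideal (P i) (P i.+1) /\ exists x, P i.+1 x /\ ~ P i x).

Definition krull_dim (d : nat) : Prop :=
  (exists P, prime_chain P d) /\ ~ (exists P, prime_chain P d.+1).

(* height(I) >= k : every prime containing I has height >= k
   (height of the unit ideal is +oo, inf over the empty set) *)
Definition height_ge (I : A -> Prop) (k : nat) : Prop :=
  forall Q, prime_ideal Q -> sub_ideal I Q ->
  exists P, prime_chain P k /\ (forall x, P k x <-> Q x).

Definition infinite_residue (M : A -> Prop) : Prop :=
  forall s : seq A, exists a, forall b, b \in s -> ~ M (a - b).

End Ideals.

(* J + (x_1 - r_1, ..., x_l - r_l) in R[x_1,...,x_n]  (variables indexed 0..n-1) *)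
Definition add_lin_ideal (R : comRingType) (n l : nat) (J : {mpoly R[n]} -> Prop)
  (r : nat -> R) : {mpoly R[n]} -> Prop :=
  fun f => exists (j : {mpoly R[n]}) (c : 'I_n -> {mpoly R[n]}), J j /\
     f = j + \sum_(i < n | (i < l)%N) c i * ('X_i - (r i)%:MP).

(* Main.v *)
Require Import Defs.
From mathcomp Require Import all_boot all_algebra.
From Stdlib Require Import Classical IndefiniteDescription ClassicalDescription.
From mathcomp Require Import ring.
Set Implicit Arguments. Unset Strict Implicit. Unset Printing Implicit Defensive.
Import GRing.Theory.
Local Open Scope ring_scope.

Section Gen.
Variable A : comRingType.

Lemma iz0 (I : A -> Prop) : is_ideal I -> I 0.
Proof. by case. Qed.
Lemma izD (I : A -> Prop) x y : is_ideal I -> I x -> I y -> I (x + y).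
Proof. by case=> _ [H _]; apply: H. Qed.
Lemma izM (I : A -> Prop) a x : is_ideal I -> I x -> I (a * x).
Proof. by case=> _ [_ H]; apply: H. Qed.
Lemma izMr (I : A -> Prop) a x : is_ideal I -> I x -> I (x * a).
Proof. by move=> hI hx; rewrite mulrC; apply: izM. Qed.
Lemma izN (I : A -> Prop) x : is_ideal I -> I x -> I (- x).
Proof. by move=> hI hx; rewrite -mulN1r; apply: izM. Qed.
Lemma izB (I : A -> Prop) x y : is_ideal I -> I x -> I y -> I (x - y).
Proof. by move=> hI hx hy; apply: izD => //; apply: izN. Qed.

Lemma acc_no_bad (Bad : (A -> Prop) -> Prop) : noetherian A ->
  (forall I, is_ideal I -> Bad I -> exists K, (is_ideal K /\ Bad K) /\
      sub_ideal I K /\ exists x, K x /\ ~ I x) ->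
  forall I, is_ideal I -> ~ Bad I.
Proof.
move=> hN hstep I0 hI0 hB0.
pose T := {I : A -> Prop | is_ideal I /\ Bad I}.
have step : forall t : T, {t' : T | sub_ideal (sval t) (sval t') /\
     exists x, sval t' x /\ ~ sval t x}.
  move=> [I [hI hB]] /=.
  apply: constructive_indefinite_description.
  have [K [hK [hIK hx]]] := hstep I hI hB.
  by exists (exist _ K hK).
pose t0 : T := exist _ I0 (conj hI0 hB0).
pose s := fix s k := match k with 0 => t0 | k.+1 => sval (step (s k)) end.
have [N HN] := hN (fun k => sval (s k)) (fun k => (proj1 (svalP (s k))))
   (fun k => proj1 (svalP (step (s k)))).
have := HN N.+1 (leqnSn N).
have [_ [x [h1 h2]]] := svalP (step (s N)).
by move=> H; apply: h2; apply: H.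
Qed.

Lemma exists_maximal (I : A -> Prop) : noetherian A -> is_ideal I -> ~ I 1 ->
  exists M, maximal_ideal M /\ sub_ideal I M.
Proof.
move=> hN hI h1; apply: NNPP => hno.
refine (@acc_no_bad (fun I => ~ I 1 /\ ~ exists M, maximal_ideal M /\ sub_ideal I M) hN _ I hI (conj h1 hno)).
clear hI h1 hno; move=> J0 hJ0 [h1 hno].
apply: NNPP => hK; apply hno; exists J0; split; last by [].
split=> //; split=> // K hK' hIK hK1 x Kx.
apply: NNPP => nIx; apply hK; exists K; split.
  split=> //; split=> // -[M [hM hKM]]; apply hno; exists M; split=> //.
  by move=> y /hIK /hKM.
by split=> //; exists x.
Qed.

Lemma maximal_inv (M : A -> Prop) c : maximal_ideal M -> ~ M c ->
  exists c', M (1 - c * c').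
Proof.
move=> [hM [h1 hmax]] hc; apply: NNPP => hno.
pose K := fun x => exists m s, M m /\ x = m + s * c.
have hK : is_ideal K.
  split; first by exists 0, 0; rewrite mul0r addr0; split=> //; apply: iz0.
  split.
    move=> x y [m [s [hm ->]]] [m' [s' [hm' ->]]]; exists (m + m'), (s + s').
    by split; [apply: izD | rewrite mulrDl addrACA].
  move=> a x [m [s [hm ->]]]; exists (a * m), (a * s).
  by split; [apply: izM | rewrite mulrDr mulrA].
have := hmax K hK.
have hMK : sub_ideal M K by move=> x hx; exists x, 0; rewrite mul0r addr0.
have hK1 : ~ K 1.
  move=> [m [s [hm e]]]; apply hno; exists s.
  by have -> : 1 - c * s = m by rewrite e mulrC addrK.
move=> /(_ hMK hK1) H; apply hc; apply H; exists 0, 1; rewrite add0r mul1r.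
by split=> //; apply: iz0.
Qed.

Lemma maximal_prime (M : A -> Prop) a b : maximal_ideal M -> M (a * b) -> M a \/ M b.
Proof.
move=> hM hab; case: (classic (M a)) => ha; [by left | right].
have [c' hc] := maximal_inv hM ha.
have -> : b = b * (1 - a * c') + c' * (a * b) by ring.
apply: izD; [by case: hM | | by case: hM => ? _; apply: izM].
by case: hM => ? _; apply: izM.
Qed.

Definition prime_cover (I : A -> Prop) :=
  exists Ps : seq (A -> Prop), (forall P, List.In P Ps -> prime_ideal P /\ sub_ideal I P) /\
   (forall Q, prime_ideal Q -> sub_ideal I Q -> exists P, List.In P Ps /\ sub_ideal P Q).

Lemma exists_prime_cover (I : A -> Prop) : noetherian A -> is_ideal I -> prime_cover I.
Proof.
move=> hN hI; apply: NNPP => hno.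
refine (@acc_no_bad (fun I => ~ prime_cover I) hN _ I hI hno).
clear hI hno; move=> {}I hI hno.
case: (classic (I 1)) => h1.
  by case: hno; exists [::]; split=> // Q [_ [hQ1 _]] /(_ 1 h1).
case: (classic (prime_ideal I)) => hp.
  case: hno; exists [:: I]; split.
    by move=> P [<-|[]]; split=> // x.
  by move=> Q _ hQ; exists I; split=> //; left.
have [a [b [hab [ha hb]]]] : exists a b, I (a * b) /\ ~ I a /\ ~ I b.
  apply: NNPP => H; apply hp; split=> //; split=> // a b hab.
  apply: NNPP => H'; apply H; exists a, b; split=> //.
  by split=> h; apply H'; [left|right].
pose Ia (a : A) := fun x => exists i s, I i /\ x = i + s * a.
have hIa a' : is_ideal (Ia a').
  split; first by exists 0, 0; rewrite mul0r addr0; split=> //; apply: iz0.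
  split.
    move=> x y [m [s [hm ->]]] [m' [s' [hm' ->]]]; exists (m + m'), (s + s').
    by split; [apply: izD | rewrite mulrDl addrACA].
  move=> c x [m [s [hm ->]]]; exists (c * m), (c * s).
  by split; [apply: izM | rewrite mulrDr mulrA].
have sIa a' : sub_ideal I (Ia a') by move=> x hx; exists x, 0; rewrite mul0r addr0.
have aIa a' : Ia a' a' by exists 0, 1; rewrite add0r mul1r; split=> //; apply: iz0.
have hQ a' Q : prime_ideal Q -> sub_ideal I Q -> Q a' -> sub_ideal (Ia a') Q.
  move=> [hQ _] hIQ hQa x [i [s [hi ->]]]; apply: izD => //; first exact: hIQ.
  exact: izM.
case: (classic (prime_cover (Ia a))) => hca; last first.
  by exists (Ia a); split=> //; split=> //; exists a.
case: (classic (prime_cover (Ia b))) => hcb; last first.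
  by exists (Ia b); split=> //; split=> //; exists b.
case: hno; case: hca => [La [hLa1 hLa2]]; case: hcb => [Lb [hLb1 hLb2]].
exists (La ++ Lb); split.
  move=> P hP; have [h|h] := List.in_app_or _ _ _ hP.
    have [hP' hsub] := hLa1 P h; split=> // x hx; apply: hsub; exact: (sIa a).
  have [hP' hsub] := hLb1 P h; split=> // x hx; apply: hsub; exact: (sIa b).
move=> Q hQp hIQ; have := hQp => -[hQi [_ hQm]].
case: (hQm a b (hIQ _ hab)) => hq.
  have [P [hP hPQ]] := hLa2 Q hQp (hQ a Q hQp hIQ hq).
  by exists P; split=> //; apply: List.in_or_app; left.
have [P [hP hPQ]] := hLb2 Q hQp (hQ b Q hQp hIQ hq).
by exists P; split=> //; apply: List.in_or_app; right.
Qed.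
End Gen.


Lemma noeth_surj (S A : comRingType) (f : {rmorphism S -> A}) :
  (forall y, exists x, f x = y) -> noetherian S -> noetherian A.
Proof.
move=> fs hN I hI hinc.
have hJ : forall k, is_ideal (fun s => I k (f s)).
  move=> k; split; first by rewrite rmorph0; apply: iz0 (hI k).
  split; first by move=> x y hx hy; rewrite rmorphD; apply: izD (hI k) _ _.
  by move=> a x hx; rewrite rmorphM; apply: izM (hI k) _.
have [N HN] := hN (fun k s => I k (f s)) hJ (fun k x hx => hinc k _ hx).
exists N => k hk y hy; have [x ex] := fs y; subst y.
exact: (HN k hk).
Qed.

Section Hilbert.
Variable A : comRingType.

Definition LC (I : {poly A} -> Prop) (d : nat) : A -> Prop :=
  fun a => exists f, I f /\ (size f <= d.+1)%N /\ f`_d = a.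

Lemma LC_ideal I d : is_ideal I -> is_ideal (LC I d).
Proof.
move=> hI; split; first by exists 0; rewrite size_poly0 coef0; split=> //; apply: iz0.
split.
  move=> x y [f [hf [sf <-]]] [g [hg [sg <-]]]; exists (f + g).
  split; first exact: izD.
  by rewrite coefD; split=> //; apply: leq_trans (size_polyD _ _) _; rewrite geq_max sf sg.
move=> a x [f [hf [sf <-]]]; exists (a *: f); split.
  by rewrite -mul_polyC; apply: izM.
by rewrite coefZ; split=> //; apply: leq_trans (size_scale_leq _ _) _.
Qed.

Lemma LC_mono I d : is_ideal I -> sub_ideal (LC I d) (LC I d.+1).
Proof.
move=> hI a [f [hf [sf <-]]]; exists (f * 'X); split; first exact: izMr hI hf.
rewrite coefMX /=; split=> //.
have [->|nz] := eqVneq f 0; first by rewrite mul0r size_poly0.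
by rewrite size_mulX.
Qed.

Lemma LC_sub I I' d : sub_ideal I I' -> sub_ideal (LC I d) (LC I' d).
Proof. by move=> hs a [f [hf [sf <-]]]; exists f; split=> //; apply: hs. Qed.

Lemma LC_mono2 I d e : is_ideal I -> (d <= e)%N -> sub_ideal (LC I d) (LC I e).
Proof.
move=> hI /subnK <-; elim: (e - d)%N => // k IH x /IH; rewrite addSn.
exact: LC_mono.
Qed.

Lemma LC_eq I I' : is_ideal I -> is_ideal I' -> sub_ideal I I' ->
  (forall d, sub_ideal (LC I' d) (LC I d)) -> sub_ideal I' I.
Proof.
move=> hI hI' hs hL f; move: {2}(size f) (leqnn (size f)) => s.
elim: s f => [|s IH] f sf hf.
  by move: sf; rewrite leqn0 size_poly_eq0 => /eqP ->; apply: iz0.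
have [/eqP|nz] := eqVneq (size f) 0%N.
  by rewrite size_poly_eq0 => /eqP ->; apply: iz0.
have hsf : size f = (size f).-1.+1 by rewrite prednK // lt0n.
move: (size f).-1 hsf => d hsf.
have [g [hg [sg eg]]] : LC I d f`_d.
  by apply: hL; exists f; split=> //; rewrite hsf.
have -> : f = (f - g) + g by rewrite subrK.
apply: izD => //; apply: IH; last by apply: izB => //; apply: hs.
apply: (@leq_trans d); last by rewrite -ltnS -hsf.
apply/leq_sizeP => j hj; rewrite coefB.
have [<-|ne] := eqVneq d j; first by rewrite eg subrr.
have hj' : (d < j)%N by rewrite ltn_neqAle ne hj.
by rewrite !nth_default ?subrr // ?hsf // (leq_trans sg).
Qed.
Lemma chain_mono (B : comRingType) (I : nat -> B -> Prop) :
  (forall k, sub_ideal (I k) (I k.+1)) -> forall k k', (k <= k')%N -> sub_ideal (I k) (I k').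
Proof.
move=> hinc k k' /subnK <-; elim: (k' - k)%N => // m IH x /IH; rewrite addSn.
exact: hinc.
Qed.

Lemma hilbert : noetherian A -> noetherian {poly A}.
Proof.
move=> hN I hI hinc.
have hmono := chain_mono hinc.
pose L k d := LC (I k) d.
have Lid k d : is_ideal (L k d) by apply: LC_ideal.
have Lmono k k' d e : (k <= k')%N -> (d <= e)%N -> sub_ideal (L k d) (L k' e).
  move=> hk hd x hx; apply: (LC_mono2 (hI k') hd).
  exact: LC_sub (hmono _ _ hk) x hx.
have [N0 HN0] := hN (fun k => L k k) (fun k => Lid k k) (fun k => Lmono _ _ _ _ (leqnSn k) (leqnSn k)).
have hMM : forall m, exists M, (N0 <= M)%N /\ forall d, (d < m)%N -> forall k, (M <= k)%N -> sub_ideal (L k d) (L M d).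
  elim=> [|m [M [hM0 hM]]]; first by exists N0; split.
  have [Nm HNm] := hN (fun k => L k m) (fun k => Lid k m) (fun k => Lmono _ _ _ _ (leqnSn k) (leqnn m)).
  exists (maxn M Nm); split; first by rewrite leq_max hM0.
  move=> d; rewrite ltnS leq_eqVlt => /orP [/eqP ->|hd] k hk.
    move=> x /(HNm k (leq_trans (leq_maxr _ _) hk)); apply: Lmono => //; exact: leq_maxr.
  move=> x /(hM d hd k (leq_trans (leq_maxl _ _) hk)); apply: Lmono => //; exact: leq_maxl.
have [M [hM0 hM]] := hMM N0.
exists M => k hk; apply: LC_eq => //; first exact: hmono.
move=> d; case: (ltnP d N0) => hd; first exact: hM.
move=> x hx.
have h1 : L (maxn k d) (maxn k d) x by apply: (Lmono k _ d) => //; [exact: leq_maxl | exact: leq_maxr].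
have h2 := HN0 (maxn k d) (leq_trans (leq_trans hM0 hk) (leq_maxl _ _)) x h1.
exact: (Lmono N0 M N0 d).
Qed.
End Hilbert.


Section MP.
Variable R : comRingType.

Lemma mpoly_gen m (S : {mpoly R[m]} -> Prop) :
  (forall c, S c%:MP) -> (forall i, S 'X_i) ->
  (forall p q, S p -> S q -> S (p + q)) -> (forall p q, S p -> S q -> S (p * q)) ->
  forall p, S p.
Proof.
move=> hC hX hD hM p; rewrite (mpolyE p).
apply: (big_ind S); [by rewrite -mpolyC0 | exact: hD | move=> mm _].
rewrite -mul_mpolyC; apply: (hM) => //; rewrite mpolyXE_id.
apply: (big_ind S); [by rewrite -mpolyC1 | exact: hM | move=> i _].
elim: (mm i) => [|k IH]; first by rewrite expr0 -mpolyC1.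
by rewrite exprS; apply: (hM).
Qed.

Definition psi m : {rmorphism {poly {mpoly R[m]}} -> {mpoly R[m.+1]}} :=
  (horner_eval ('X_ord_max : {mpoly R[m.+1]})) \o (map_poly (@mwiden m R)).

Lemma psi_surj m : forall y : {mpoly R[m.+1]}, exists x, psi m x = y.
Proof.
apply: mpoly_gen.
- move=> c; exists ((c%:MP)%:P); rewrite /psi /= map_polyC /= horner_evalE hornerC.
  exact: mwidenC.
- move=> i; case: (ltnP i m) => hi.
    exists (('X_(Ordinal hi))%:P); rewrite /psi /= map_polyC /= horner_evalE hornerC.
    rewrite mwidenX mnmwiden1; congr 'X_[U_(_)]; exact: val_inj.
  exists 'X; rewrite /psi /= map_polyX horner_evalE hornerX.
  congr (mpolyX _ U_(_)); apply: val_inj => /=; apply/eqP; by rewrite eqn_leq hi -ltnS ltn_ord.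
- by move=> p q [x <-] [y <-]; exists (x + y); rewrite rmorphD.
- by move=> p q [x <-] [y <-]; exists (x * y); rewrite rmorphM.
Qed.

Definition mc : {rmorphism R -> {mpoly R[0]}} := @mpolyC 0 R.

Lemma mc_surj : forall y : {mpoly R[0]}, exists x, mc x = y.
Proof.
apply: mpoly_gen.
- by move=> c; exists c.
- by case.
- by move=> p q [x <-] [y <-]; exists (x + y); rewrite rmorphD.
- by move=> p q [x <-] [y <-]; exists (x * y); rewrite rmorphM.
Qed.

Lemma mpoly_noeth m : noetherian R -> noetherian {mpoly R[m]}.
Proof.
move=> hN; elim: m => [|m IH]; first exact: noeth_surj mc_surj hN.
exact: noeth_surj (@psi_surj m) (hilbert IH).
Qed.
End MP.


Definition pdec (P : Prop) : bool := if excluded_middle_informative P then true else false.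
Lemma pdecP (P : Prop) : pdec P <-> P.
Proof. by rewrite /pdec; case: excluded_middle_informative. Qed.

Lemma In_filter T (p : pred T) x (L : seq T) : List.In x (filter p L) <-> List.In x L /\ p x.
Proof.
elim: L => [|y L IH] /=; first by split=> // -[].
case: ifP => py /=.
  rewrite IH; split => [[<-|[h px]]|[[<-|h] px]]; auto.
rewrite IH; split => [[h px]|[[e|h] px]]; auto.
by move: py; rewrite e px.
Qed.

Lemma In_map_mem (T : Type) (U : eqType) (f : T -> U) x (L : seq T) :
  List.In x L -> f x \in map f L.
Proof.
elim: L => // y L IH /= [->|h]; rewrite in_cons; first by rewrite eqxx.
by rewrite IH ?orbT.
Qed.

Section Avoid.
Variable R : comRingType.

Lemma common_elt (M : R -> Prop) (O : seq ((R -> Prop) * R)) : maximal_ideal M ->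
  (forall x, List.In x O -> is_ideal x.1 /\ ~ sub_ideal x.1 M) ->
  exists c, ~ M c /\ forall x, List.In x O -> x.1 c.
Proof.
move=> hM; elim: O => [|x O IH] hO.
  by exists 1; split=> //; case: hM => _ [].
have [c [hc hcO]] := IH (fun y hy => hO y (or_intror hy)).
have [hx1 hx2] := hO x (or_introl erefl).
have [y [hy hyM]] : exists y, x.1 y /\ ~ M y.
  by apply: NNPP => H; apply: hx2 => z hz; apply: NNPP => hMz; apply: H; exists z.
exists (y * c); split.
  by move=> /(maximal_prime hM) [].
move=> z [<-|hz]; first exact: izMr.
have [hzi _] := hO z (or_intror hz); apply: izM hzi _; exact: hcO.
Qed.

Lemma avoid (L : seq ((R -> Prop) * R)) :
  (forall x, List.In x L -> maximal_ideal x.1 /\ infinite_residue x.1) ->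
  exists r, forall x, List.In x L -> ~ x.1 (r - x.2).
Proof.
move: {2}(size L) (leqnn (size L)) => k; elim: k L => [|k IH] [|[M b] L'] //=.
  by move=> _ _; exists 0.
  by move=> _ _; exists 0.
rewrite ltnS => hs hL.
have [hM hMi] := hL (M, b) (or_introl erefl).
pose p := fun x : (R -> Prop) * R => ~~ pdec (sub_ideal x.1 M).
pose O := filter p L'.
have [r0 hr0] : exists r, forall x, List.In x O -> ~ x.1 (r - x.2).
  apply: IH; first by rewrite size_filter; apply: leq_trans (count_size _ _) hs.
  by move=> x /In_filter [hx _]; apply: hL; right.
have [c [hc hcO]] : exists c, ~ M c /\ forall x, List.In x O -> x.1 c.
  apply: common_elt => // x /In_filter [hx px]; split.
    by have [[]] := hL x (or_intror hx).
  by move=> H; move: px; rewrite /p; have /pdecP -> := H.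
have [c' hc'] := maximal_inv hM hc.
have [a ha] := hMi (map (fun x : (R -> Prop) * R => x.2 - r0) ((M, b) :: L')).
exists (r0 + c * c' * a) => x hx.
case: (classic (sub_ideal x.1 M)) => hsub.
  move=> /hsub hxM; apply: (ha (x.2 - r0)); first by have := @In_map_mem _ R (fun x : (R -> Prop) * R => x.2 - r0) x ((M, b) :: L') hx.
  have -> : a - (x.2 - r0) = (r0 + c * c' * a - x.2) + (1 - c * c') * a by ring.
  by apply: izD; [case: hM| |apply: izMr => //; case: hM].
have hxO : List.In x O.
  apply/In_filter; split; first by case: hx => // e; case: hsub; rewrite -e.
  by rewrite /p; apply/negP => /pdecP.
have hxi : is_ideal x.1 by have [[]] := hL x (or_intror (proj1 (proj1 (In_filter _ _ _) hxO))).
move=> H; apply: (hr0 x hxO).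
have -> : r0 - x.2 = (r0 + c * c' * a - x.2) - (c' * a) * c by ring.
exact: izB hxi H (izM _ hxi (hcO x hxO)).
Qed.
End Avoid.


Section Main.
Variables (R : comRingType) (n : nat).
Implicit Types (J : {mpoly R[n]} -> Prop) (r : nat -> R).

Lemma ali_ideal J l r : is_ideal J -> is_ideal (add_lin_ideal l J r).
Proof.
move=> hJ; split.
  exists 0, (fun _ => 0); split; first exact: iz0.
  by rewrite big1 ?addr0 // => i _; rewrite mul0r.
split.
  move=> x y [j [c [hj ->]]] [j' [c' [hj' ->]]].
  exists (j + j'), (fun i => c i + c' i); split; first exact: izD.
  rewrite addrACA; congr (_ + _); rewrite -big_split /=.
  by apply: eq_bigr => i _; rewrite mulrDl.
move=> a x [j [c [hj ->]]]; exists (a * j), (fun i => a * c i); split; first exact: izM.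
rewrite mulrDr mulr_sumr; congr (_ + _); apply: eq_bigr => i _; by rewrite mulrA.
Qed.

Lemma ali_sub J l r c : sub_ideal (add_lin_ideal l J r)
   (add_lin_ideal l.+1 J (fun i => if i == l then c else r i)).
Proof.
move=> x [j [cc [hj ->]]]; exists j, (fun i : 'I_n => if (i < l)%N then cc i else 0); split=> //.
congr (_ + _); rewrite big_mkcond [RHS]big_mkcond; apply: eq_bigr => i _.
case: (ltnP i l) => hi.
  by rewrite (ltn_trans hi (ltnSn l)) (ltn_eqF hi).
by rewrite mul0r; case: ifP.
Qed.

Lemma ali_mem J l r c (hl : (l < n)%N) : is_ideal J ->
  add_lin_ideal l.+1 J (fun i => if i == l then c else r i) ('X_(Ordinal hl) - c%:MP).
Proof.
move=> hJ; exists 0, (fun i : 'I_n => if (i == l :> nat) then 1 else 0); split.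
  exact: iz0.
rewrite add0r (bigD1 (Ordinal hl)) //= eqxx mul1r big1 ?addr0 //.
by move=> i /andP [_ hi]; rewrite ifF ?mul0r //; apply/negbTE; move: hi; apply: contra => /eqP e; apply/eqP; apply: val_inj.
Qed.

Lemma pairs (L : 'I_n) : noetherian R ->
  (forall M : R -> Prop, maximal_ideal M -> infinite_residue M) ->
  forall Ps : seq ({mpoly R[n]} -> Prop), (forall P, List.In P Ps -> prime_ideal P) ->
  exists Lp : seq ((R -> Prop) * R),
    (forall x, List.In x Lp -> maximal_ideal x.1 /\ infinite_residue x.1) /\
    forall c, (forall x, List.In x Lp -> ~ x.1 (c - x.2)) ->
      forall P, List.In P Ps -> ~ P ('X_L - c%:MP).
Proof.
move=> hN hIR; elim=> [|P Ps IH] hPs.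
  by exists [::]; split.
have [Lp [hLp1 hLp2]] := IH (fun Q hQ => hPs Q (or_intror hQ)).
have [hPi [hP1 hPm]] := hPs P (or_introl erefl).
case: (classic (exists b, P ('X_L - b%:MP))) => [[b hb]|hnb]; last first.
  exists Lp; split=> // c hc Q [<-|hQ]; last exact: hLp2.
  by move=> h; apply: hnb; exists c.
pose q := fun a : R => P a%:MP.
have hq : is_ideal q.
  split; first by rewrite /q mpolyC0; apply: iz0.
  split; first by move=> x y hx hy; rewrite /q mpolyCD; apply: izD.
  by move=> a x hx; rewrite /q mpolyCM; apply: izM.
have hq1 : ~ q 1 by rewrite /q mpolyC1.
have [M [hM hqM]] := exists_maximal hN hq hq1.
exists ((M, b) :: Lp); split.
  move=> x [<-|hx]; last exact: hLp1.
  by split=> //; apply: hIR.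
move=> c hc Q [<-|hQ]; last by apply: hLp2 => // x hx; apply: hc; right.
move=> hPc; apply: (hc (M, b) (or_introl erefl)) => /=.
have : q (b - c).
  rewrite /q mpolyCB.
  have -> : b%:MP - c%:MP = ('X_L - c%:MP) - ('X_L - b%:MP) by ring.
  exact: izB.
move=> /hqM hMbc; rewrite -opprB; apply: izN => //; by case: hM.
Qed.
End Main.

Lemma step_lemma (R : comRingType) (n : nat) (J : {mpoly R[n]} -> Prop) l r h
  (hl : (l < n)%N) :
  noetherian R -> (forall M : R -> Prop, maximal_ideal M -> infinite_residue M) ->
  is_ideal J -> height_ge (add_lin_ideal l J r) h ->
  exists c, height_ge (add_lin_ideal l.+1 J (fun i => if i == l then c else r i)) h.+1.
Proof.
move=> hN hIR hJ hH.
have hI := ali_ideal l r hJ.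
have [Ps [hPs1 hPs2]] := exists_prime_cover (@mpoly_noeth R n hN) hI.
have [Lp [hLp1 hLp2]] := pairs (Ordinal hl) hN hIR (fun P hP => proj1 (hPs1 P hP)).
have [c hc] := avoid hLp1.
exists c => Q hQ hIQ.
have hQI : sub_ideal (add_lin_ideal l J r) Q by move=> x /(ali_sub c) /hIQ.
have hQf := hIQ _ (ali_mem r c hl hJ).
have [P [hP hPQ]] := hPs2 Q hQ hQI.
have [hPp hIP] := hPs1 P hP.
have hPf := hLp2 c hc P hP.
have [C [[hC1 hC2] hCh]] := hH P hPp hIP.
exists (fun i => if (i <= h)%N then C i else Q); split; last first.
  by move=> x; rewrite ltnn.
split.
  move=> i hi; case: ifP => // hih; exact: hC1.
move=> i hi; rewrite ltnS in hi; rewrite hi.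
case: (ltnP i h) => hih.
  exact: hC2.
have ei : i = h by apply/eqP; rewrite eqn_leq hi hih.
subst i; split.
  by move=> x /hCh /hPQ.
by exists ('X_(Ordinal hl) - c%:MP); split=> // /hCh.
Qed.

Theorem lemma2p4 (R : comRingType) (d n : nat) (J : {mpoly R[n]} -> Prop) :
  noetherian R -> krull_dim R d ->
  (forall M : R -> Prop, maximal_ideal M -> infinite_residue M) ->
  is_ideal J -> height_ge J d.+1 ->
  forall l : nat, (l <= n)%N ->
  exists r : nat -> R,
    add_lin_ideal l J r 1 \/ height_ge (add_lin_ideal l J r) (d + l).+1.
Proof.
move=> hN _ hIR hJ hH l hl.
suff [r hr] : exists r : nat -> R, height_ge (add_lin_ideal l J r) (d + l).+1.
  by exists r; right.
elim: l hl => [|l IH] hl.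
  exists (fun _ => 0) => Q hQ hIQ; rewrite addn0; apply: hH => // x hx.
  apply: hIQ; exists x, (fun _ => 0); split=> //.
  by rewrite big1 ?addr0 // => i _; rewrite mul0r.
have [r hr] := IH (ltnW hl).
have [c hc] := step_lemma hl hN hIR hJ hr.
by exists (fun i => if i == l then c else r i); rewrite addnS.
Qed.
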